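(* Let $a$ and $q \geq 1$ be integers with $\gcd(a,q) = 1$. Let $n, k, L$ be positive integers and $N \geq 1$ a real number such that $$L \leq N^n, \qquad q \leq L N^k, \qquad 2^{n+k+1} < N.$$ Let $\mathcal{P}$ be the set of primes in $[N/2, N]$ not dividing $q$. Then $$\sum_{l = 1}^{L} \left| \sum_{q_1 \in \mathcal{P}} \cdots \sum_{q_n \in \mathcal{P}} e\!\left(\frac{l\, q_1 \cdots q_n\, a}{q}\right) \right| \leq C\, 2^{n+k} n^n \max\!\left(L N^{n/2 + k/2},\ \frac{L N^n}{q^{1/2}}\right),$$ where $C>0$ is an absolute constant.
   Context: $e(x) := e^{2\pi i x}$. *)

(* Defs.v *)
From Stdlib Require Import Reals Lra Lia ZArith Znumtheory List.
Open Scope R_scope.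

(* e(x) = exp(2 pi i x), represented by its real and imaginary parts. *)
Definition e_re (x : R) : R := cos (2 * PI * x).
Definition e_im (x : R) : R := sin (2 * PI * x).

Definition abs_sum_e (xs : list R) : R :=
  let re := fold_right Rplus 0 (map e_re xs) in
  let im := fold_right Rplus 0 (map e_im xs) in
  sqrt (re * re + im * im).

Definition sumR (xs : list R) : R := fold_right Rplus 0 xs.

(* The set P of primes p with N/2 <= p <= N and p not dividing q,
   listed without repetition (candidates 0 .. up N - 1 cover [N/2, N]). *)
Definition primesP (N : R) (q : Z) : list Z :=
  filter
    (fun p : Z =>
       (if prime_dec p then true else false) &&
       (if Rle_dec (N / 2) (IZR p) then true else false) &&
       (if Rle_dec (IZR p) N then true else false) &&
       negb (Z.eqb (Z.rem q p) 0))%bool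
    (map Z.of_nat (seq 0 (Z.to_nat (up N)))).

Fixpoint tuples (s : list Z) (n : nat) : list (list Z) :=
  match n with
  | O => nil :: nil
  | S m => flat_map (fun x => map (cons x) (tuples s m)) s
  end.

Definition prodZ (t : list Z) : Z := fold_right Z.mul 1%Z t.

(* Main.v *)
Require Import Defs.
From Stdlib Require Import Reals Lra Lia Psatz ZArith Znumtheory List FinFun.
Open Scope R_scope.
Arguments sumR : simpl never.

Lemma sumR_app l1 l2 : sumR (l1 ++ l2) = sumR l1 + sumR l2.
Proof. induction l1; simpl; unfold sumR in *; simpl; [lra|]. rewrite IHl1; lra. Qed.

Lemma sumR_cons x l : sumR (x :: l) = x + sumR l.
Proof. reflexivity. Qed.

Lemma sumR_nil : sumR nil = 0.
Proof. reflexivity. Qed.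

Lemma sumR_plus {A} (f g : A -> R) l :
  sumR (map (fun x => f x + g x) l) = sumR (map f l) + sumR (map g l).
Proof. induction l; simpl; rewrite ?sumR_cons; [unfold sumR; simpl; lra| rewrite IHl; lra]. Qed.

Lemma sumR_scal {A} (c : R) (f : A -> R) l :
  sumR (map (fun x => c * f x) l) = c * sumR (map f l).
Proof. induction l; simpl; rewrite ?sumR_cons; [unfold sumR; simpl; lra| rewrite IHl; lra]. Qed.

Lemma sumR_le {A} (f g : A -> R) l :
  (forall x, In x l -> f x <= g x) -> sumR (map f l) <= sumR (map g l).
Proof.
  induction l; intros H; simpl; rewrite ?sumR_cons; [unfold sumR; simpl; lra|].
  assert (f a <= g a) by (apply H; left; auto).
  assert (sumR (map f l) <= sumR (map g l)) by (apply IHl; intros; apply H; right; auto). lra.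
Qed.

Lemma sumR_ext {A} (f g : A -> R) l :
  (forall x, In x l -> f x = g x) -> sumR (map f l) = sumR (map g l).
Proof.
  intros H; apply Rle_antisym; apply sumR_le; intros x Hx; rewrite (H x Hx); lra.
Qed.

Lemma sumR_nonneg {A} (f : A -> R) l :
  (forall x, In x l -> 0 <= f x) -> 0 <= sumR (map f l).
Proof.
  intros H. assert (sumR (map (fun _ => 0) l) = 0).
  { induction l; simpl; rewrite ?sumR_cons; [reflexivity| rewrite IHl; [lra|intros; apply H; right; auto]]. }
  rewrite <- H0. apply sumR_le. auto.
Qed.

Lemma sumR_const {A} (c : R) (l : list A) : sumR (map (fun _ => c) l) = INR (length l) * c.
Proof. induction l; cbn [map length]; rewrite ?sumR_cons; [unfold sumR; simpl; lra|]. rewrite IHl, S_INR; lra. Qed.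

Lemma sumR_flat_map {A B} (F : B -> R) (g : A -> list B) l :
  sumR (map F (flat_map g l)) = sumR (map (fun x => sumR (map F (g x))) l).
Proof. induction l; simpl; [reflexivity|]. rewrite map_app, sumR_app, sumR_cons, IHl; reflexivity. Qed.

Lemma sumR_map {A B} (F : B -> R) (g : A -> B) l :
  sumR (map F (map g l)) = sumR (map (fun x => F (g x)) l).
Proof. rewrite map_map; reflexivity. Qed.

Lemma sumR_swap {A B} (F : A -> B -> R) l1 l2 :
  sumR (map (fun x => sumR (map (fun y => F x y) l2)) l1) =
  sumR (map (fun y => sumR (map (fun x => F x y) l1)) l2).
Proof.
  induction l1; simpl.
  - rewrite sumR_nil. transitivity (sumR (map (fun _ : B => 0) l2)).
    + rewrite sumR_const; lra.
    + apply sumR_ext; intros; reflexivity.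
  - rewrite sumR_cons, IHl1, <- sumR_plus. apply sumR_ext; intros; rewrite sumR_cons; reflexivity.
Qed.

Lemma sumR_mult {A B} (f : A -> R) (g : B -> R) l1 l2 :
  sumR (map f l1) * sumR (map g l2) =
  sumR (map (fun x => sumR (map (fun y => f x * g y) l2)) l1).
Proof.
  induction l1; simpl.
  - rewrite sumR_nil; lra.
  - rewrite !sumR_cons, <- IHl1, sumR_scal. lra.
Qed.

Lemma cauchy_schwarz {A} (f : A -> R) l :
  sumR (map f l) ^ 2 <= INR (length l) * sumR (map (fun x => f x ^ 2) l).
Proof.
  induction l; cbn [map length]; rewrite ?sumR_cons; [unfold sumR; simpl; lra|].
  set (S := sumR (map f l)) in *. set (Q := sumR (map (fun x => f x ^ 2) l)) in *.
  set (n := INR (length l)) in *. rewrite S_INR. fold n.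
  assert (Hn : 0 <= n) by apply pos_INR.
  assert (HQ : 0 <= Q) by (apply sumR_nonneg; intros; nra).
  destruct (Req_dec n 0) as [H0|H0].
  - rewrite H0 in IHl. assert (S = 0) by nra. subst n. rewrite H0, H. nra.
  - assert (n > 0) by lra.
    assert (n * (n * f a ^ 2 + Q - 2 * f a * S) = (n * f a - S)^2 + (n * Q - S^2)) by ring.
    assert (0 <= (n * f a - S)^2) by apply pow2_ge_0.
    assert (n * (n * f a ^ 2 + Q - 2 * f a * S) >= 0) by lra.
    assert (n * f a ^ 2 + Q - 2 * f a * S >= 0).
    { destruct (Rle_dec 0 (n * f a ^ 2 + Q - 2 * f a * S)); [lra|].
      exfalso. nra. }
    nra.
Qed.

Definition indb (b : bool) : R := if b then 1 else 0.

Lemma indb_nonneg b : 0 <= indb b.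
Proof. destruct b; simpl; lra. Qed.

Lemma indb_le1 b : indb b <= 1.
Proof. destruct b; simpl; lra. Qed.

Lemma sum_indb_length {A} (f : A -> bool) l :
  sumR (map (fun x => indb (f x)) l) = INR (length (filter f l)).
Proof.
  induction l; simpl; [reflexivity|]. rewrite sumR_cons, IHl.
  destruct (f a); cbn [length]; [rewrite S_INR|]; unfold indb; lra.
Qed.

Lemma sum_indb_atmost1 {A} (f : A -> bool) l :
  NoDup l -> (forall x y, In x l -> In y l -> f x = true -> f y = true -> x = y) ->
  sumR (map (fun x => indb (f x)) l) <= 1.
Proof.
  induction 1 as [|a l Ha Hl IH]; intros H; simpl; rewrite ?sumR_cons; [unfold sumR; simpl; lra|].
  destruct (f a) eqn:E.
  - assert (sumR (map (fun x => indb (f x)) l) = sumR (map (fun _ => 0) l)).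
    { apply sumR_ext. intros x Hx. destruct (f x) eqn:E2; [|reflexivity].
      exfalso. assert (x = a) by (apply H; simpl; auto). subst; tauto. }
    rewrite H0, sumR_const. simpl; lra.
  - simpl. assert (sumR (map (fun x => indb (f x)) l) <= 1) by (apply IH; intros; apply H; simpl; auto). lra.
Qed.

Lemma sin_period_Z y (k : Z) : sin (y + 2 * PI * IZR k) = sin y.
Proof.
  destruct (Z_le_gt_dec 0 k).
  - rewrite <- (Z2Nat.id k) by lia. rewrite <- INR_IZR_INZ.
    replace (y + 2 * PI * INR (Z.to_nat k)) with (y + 2 * INR (Z.to_nat k) * PI) by ring.
    apply sin_period.
  - pose (j := Z.to_nat (- k)).
    assert (IZR k = - INR j) by (unfold j; rewrite INR_IZR_INZ, Z2Nat.id by lia; rewrite opp_IZR; ring).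
    rewrite H. rewrite <- (sin_period (y + 2 * PI * - INR j) j). f_equal; ring.
Qed.

Lemma cos_period_Z y (k : Z) : cos (y + 2 * PI * IZR k) = cos y.
Proof.
  destruct (Z_le_gt_dec 0 k).
  - rewrite <- (Z2Nat.id k) by lia. rewrite <- INR_IZR_INZ.
    replace (y + 2 * PI * INR (Z.to_nat k)) with (y + 2 * INR (Z.to_nat k) * PI) by ring.
    apply cos_period.
  - pose (j := Z.to_nat (- k)).
    assert (IZR k = - INR j) by (unfold j; rewrite INR_IZR_INZ, Z2Nat.id by lia; rewrite opp_IZR; ring).
    rewrite H. rewrite <- (cos_period (y + 2 * PI * - INR j) j). f_equal; ring.
Qed.

Lemma cos_int k : cos (2 * PI * IZR k) = 1.
Proof. rewrite <- (Rplus_0_l (2 * PI * IZR k)), cos_period_Z. apply cos_0. Qed.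

Lemma sin_int k : sin (2 * PI * IZR k) = 0.
Proof. rewrite <- (Rplus_0_l (2 * PI * IZR k)), sin_period_Z. apply sin_0. Qed.

Lemma tele_cos x M :
  2 * sin x * sumR (map (fun i => cos (2 * INR i * x)) (seq 1 M)) =
  sin ((2 * INR M + 1) * x) - sin x.
Proof.
  induction M.
  - simpl. rewrite sumR_nil. replace ((2*0+1)*x) with x by ring. ring.
  - rewrite seq_S, map_app, sumR_app. cbn [map]. rewrite sumR_cons, sumR_nil.
    rewrite Rmult_plus_distr_l, IHM. replace (1 + M)%nat with (S M) by lia.
    rewrite S_INR.
    replace ((2 * (INR M + 1) + 1) * x) with ((2 * (INR M + 1)) * x + x) by ring.
    replace ((2 * INR M + 1) * x) with ((2 * (INR M + 1)) * x - x) by ring.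
    rewrite sin_plus, sin_minus. ring.
Qed.

Lemma tele_sin x M :
  2 * sin x * sumR (map (fun i => sin (2 * INR i * x)) (seq 1 M)) =
  cos x - cos ((2 * INR M + 1) * x).
Proof.
  induction M.
  - simpl. rewrite sumR_nil. replace ((2*0+1)*x) with x by ring. ring.
  - rewrite seq_S, map_app, sumR_app. cbn [map]. rewrite sumR_cons, sumR_nil.
    rewrite Rmult_plus_distr_l, IHM. replace (1 + M)%nat with (S M) by lia.
    rewrite S_INR.
    replace ((2 * (INR M + 1) + 1) * x) with ((2 * (INR M + 1)) * x + x) by ring.
    replace ((2 * INR M + 1) * x) with ((2 * (INR M + 1)) * x - x) by ring.
    rewrite cos_plus, cos_minus. ring.
Qed.

Definition rng (M : nat) : list Z := map Z.of_nat (seq 1 M).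

Lemma geom_cos (q d : Z) (m : nat) : (1 <= q)%Z ->
  sumR (map (fun w => cos (2 * PI * (IZR (d * w) / IZR q))) (rng (m * Z.to_nat q))) =
  if Z.eqb (Z.rem d q) 0 then INR (m * Z.to_nat q) else 0.
Proof.
  intros Hq. unfold rng. rewrite map_map.
  assert (Hq' : IZR q <> 0) by (apply not_0_IZR; lia).
  destruct (Z.eqb_spec (Z.rem d q) 0) as [E|E].
  - apply Z.rem_divide in E; [|lia]. destruct E as [e ->].
    transitivity (sumR (map (fun _ : nat => 1) (seq 1 (m * Z.to_nat q)))).
    + apply sumR_ext. intros i _.
      replace (IZR (e * q * Z.of_nat i) / IZR q) with (IZR (e * Z.of_nat i)).
      * apply cos_int.
      * rewrite !mult_IZR. field; auto.
    + rewrite sumR_const, length_seq. ring.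
  - set (x := PI * IZR d / IZR q).
    assert (Hs : sin x <> 0).
    { intro H0. apply sin_eq_0_0 in H0. destruct H0 as [k Hk]. apply E.
      unfold x in Hk. assert (IZR d = IZR k * IZR q).
      { assert (PI * IZR d = IZR k * PI * IZR q) by (rewrite <- Hk; field; auto).
        apply (Rmult_eq_reg_l PI); [|apply PI_neq0]. rewrite H; ring. }
      rewrite <- mult_IZR in H. apply eq_IZR in H. subst d. apply Z.rem_mul; lia. }
    apply (Rmult_eq_reg_l (2 * sin x)); [|intro; apply Hs; lra].
    transitivity (2 * sin x * sumR (map (fun i => cos (2 * INR i * x)) (seq 1 (m * Z.to_nat q)))).
    { f_equal. apply sumR_ext. intros i _. f_equal. unfold x.
      rewrite mult_IZR, <- INR_IZR_INZ. field; auto. }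
    rewrite tele_cos.
    replace ((2 * INR (m * Z.to_nat q) + 1) * x) with (x + 2 * PI * IZR (Z.of_nat m * d)).
    + rewrite sin_period_Z. ring.
    + unfold x. rewrite mult_INR, mult_IZR, <- INR_IZR_INZ, (INR_IZR_INZ (Z.to_nat q)), Z2Nat.id by lia.
      field; auto.
Qed.

Lemma geom_sin (q d : Z) (m : nat) : (1 <= q)%Z ->
  sumR (map (fun w => sin (2 * PI * (IZR (d * w) / IZR q))) (rng (m * Z.to_nat q))) = 0.
Proof.
  intros Hq. unfold rng. rewrite map_map.
  assert (Hq' : IZR q <> 0) by (apply not_0_IZR; lia).
  destruct (Z.eqb_spec (Z.rem d q) 0) as [E|E].
  - apply Z.rem_divide in E; [|lia]. destruct E as [e ->].
    transitivity (sumR (map (fun _ : nat => 0) (seq 1 (m * Z.to_nat q)))).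
    + apply sumR_ext. intros i _.
      replace (IZR (e * q * Z.of_nat i) / IZR q) with (IZR (e * Z.of_nat i)).
      * apply sin_int.
      * rewrite !mult_IZR. field; auto.
    + rewrite sumR_const. ring.
  - set (x := PI * IZR d / IZR q).
    assert (Hs : sin x <> 0).
    { intro H0. apply sin_eq_0_0 in H0. destruct H0 as [k Hk]. apply E.
      unfold x in Hk. assert (IZR d = IZR k * IZR q).
      { assert (PI * IZR d = IZR k * PI * IZR q) by (rewrite <- Hk; field; auto).
        apply (Rmult_eq_reg_l PI); [|apply PI_neq0]. rewrite H; ring. }
      rewrite <- mult_IZR in H. apply eq_IZR in H. subst d. apply Z.rem_mul; lia. }
    apply (Rmult_eq_reg_l (2 * sin x)); [|intro; apply Hs; lra].
    transitivity (2 * sin x * sumR (map (fun i => sin (2 * INR i * x)) (seq 1 (m * Z.to_nat q)))).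
    { f_equal. apply sumR_ext. intros i _. f_equal. unfold x.
      rewrite mult_IZR, <- INR_IZR_INZ. field; auto. }
    rewrite tele_sin.
    replace ((2 * INR (m * Z.to_nat q) + 1) * x) with (x + 2 * PI * IZR (Z.of_nat m * d)).
    + rewrite cos_period_Z. ring.
    + unfold x. rewrite mult_INR, mult_IZR, <- INR_IZR_INZ, (INR_IZR_INZ (Z.to_nat q)), Z2Nat.id by lia.
      field; auto.
Qed.

Definition ph (q c w : Z) : R := 2 * PI * (IZR (c * w) / IZR q).

Definition Gf (q : Z) (As : list (R * R * Z)) (w : Z) : R :=
  sumR (map (fun al => fst (fst al) * cos (ph q (snd al) w) + snd (fst al) * sin (ph q (snd al) w)) As).
Definition Kf (q : Z) (As : list (R * R * Z)) (w : Z) : R :=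
  sumR (map (fun al => fst (fst al) * sin (ph q (snd al) w) - snd (fst al) * cos (ph q (snd al) w)) As).

Lemma ph_minus q c1 c2 w : (q <> 0)%Z -> ph q c1 w - ph q c2 w = ph q (c1 - c2) w.
Proof. intros. unfold ph. rewrite Z.mul_sub_distr_r, minus_IZR. field. apply not_0_IZR; auto. Qed.

Lemma parseval q As m : (1 <= q)%Z ->
  (forall al, In al As -> fst (fst al) ^ 2 + snd (fst al) ^ 2 <= 1) ->
  sumR (map (fun w => Gf q As w ^ 2) (rng (m * Z.to_nat q))) <=
  INR (m * Z.to_nat q) *
  sumR (map (fun a1 => sumR (map (fun a2 => indb (Z.eqb (Z.rem (snd a1 - snd a2) q) 0)) As)) As).
Proof.
  intros Hq HAs.
  set (M := (m * Z.to_nat q)%nat).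
  set (T := fun (a1 a2 : R * R * Z) (w : Z) =>
     (fst (fst a1) * fst (fst a2) + snd (fst a1) * snd (fst a2)) * cos (ph q (snd a1 - snd a2) w)
     + (snd (fst a1) * fst (fst a2) - fst (fst a1) * snd (fst a2)) * sin (ph q (snd a1 - snd a2) w)).
  assert (HT : forall w, Gf q As w ^ 2 + Kf q As w ^ 2 =
            sumR (map (fun a1 => sumR (map (fun a2 => T a1 a2 w) As)) As)).
  { intro w. unfold Gf, Kf. rewrite <- !Rsqr_pow2. unfold Rsqr. rewrite !sumR_mult, <- sumR_plus.
    apply sumR_ext. intros a1 _. rewrite <- sumR_plus. apply sumR_ext. intros a2 _.
    unfold T. rewrite <- !ph_minus by lia. rewrite cos_minus, sin_minus. ring. }
  apply Rle_trans with (sumR (map (fun w => Gf q As w ^ 2 + Kf q As w ^ 2) (rng M))).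
  { apply sumR_le. intros w _. assert (0 <= Kf q As w ^ 2) by apply pow2_ge_0. lra. }
  rewrite (sumR_ext _ _ _ (fun w _ => HT w)).
  rewrite sumR_swap. rewrite <- sumR_scal. apply sumR_le. intros a1 Ha1.
  rewrite sumR_swap. rewrite <- sumR_scal. apply sumR_le. intros a2 Ha2.
  unfold T. rewrite sumR_plus, !sumR_scal. unfold ph at 1 2.
  unfold M. rewrite geom_cos by lia.
  unfold ph. rewrite geom_sin by lia.
  destruct (Z.eqb (Z.rem (snd a1 - snd a2) q) 0); simpl.
  - pose proof (HAs a1 Ha1). pose proof (HAs a2 Ha2).
    set (u1 := fst (fst a1)) in *. set (v1 := snd (fst a1)) in *.
    set (u2 := fst (fst a2)) in *. set (v2 := snd (fst a2)) in *.
    assert (0 <= (u1 - u2)^2) by apply pow2_ge_0. assert (0 <= (v1 - v2)^2) by apply pow2_ge_0.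
    assert (u1 * u2 + v1 * v2 <= 1) by nra.
    assert (0 <= INR (m * Z.to_nat q)) by apply pos_INR. unfold indb. nra.
  - unfold indb. lra.
Qed.


Lemma in_rng z M : In z (rng M) <-> (1 <= z <= Z.of_nat M)%Z.
Proof.
  unfold rng. rewrite in_map_iff. split.
  - intros [i [<- Hi]]. apply in_seq in Hi. lia.
  - intros H. exists (Z.to_nat z). split; [lia|]. apply in_seq. lia.
Qed.

Lemma rng_NoDup M : NoDup (rng M).
Proof. unfold rng. apply FinFun.Injective_map_NoDup; [intros x y; lia|apply seq_NoDup]. Qed.

Lemma rng_length M : length (rng M) = M.
Proof. unfold rng. rewrite length_map, length_seq. reflexivity. Qed.

Lemma pick_sum (g : Z -> R) r x : NoDup r -> In x r ->
  sumR (map (fun z => g z * indb (Z.eqb x z)) r) = g x.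
Proof.
  induction 1 as [|a r Ha Hr IH]; intros Hx; [destruct Hx|].
  cbn [map]. rewrite sumR_cons. destruct (Z.eqb_spec x a) as [->|E].
  - transitivity (g a * 1 + sumR (map (fun _ => 0) r)).
    + f_equal. apply sumR_ext. intros z Hz. destruct (Z.eqb_spec a z); [subst; tauto|]. unfold indb; ring.
    + rewrite sumR_const. ring.
  - destruct Hx as [Hx|Hx]; [congruence|]. rewrite IH by auto. unfold indb; ring.
Qed.

Lemma reindex {A} (As : list A) (phi : A -> Z) (r : list Z) (g : Z -> R) (R0 : R) :
  NoDup r -> (forall a, In a As -> In (phi a) r) -> (forall z, 0 <= g z) ->
  (forall z, In z r -> sumR (map (fun a => indb (Z.eqb (phi a) z)) As) <= R0) ->
  sumR (map (fun a => g (phi a)) As) <= R0 * sumR (map g r).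
Proof.
  intros Hr Hin Hg Hc.
  assert (E : sumR (map (fun a => g (phi a)) As) =
              sumR (map (fun z => g z * sumR (map (fun a => indb (Z.eqb (phi a) z)) As)) r)).
  { transitivity (sumR (map (fun a => sumR (map (fun z => g z * indb (Z.eqb (phi a) z)) r)) As)).
    - apply sumR_ext. intros a Ha. rewrite pick_sum; auto.
    - rewrite sumR_swap. apply sumR_ext. intros z _. rewrite sumR_scal. reflexivity. }
  rewrite E, <- sumR_scal. apply sumR_le. intros z Hz.
  specialize (Hc z Hz). specialize (Hg z). nra.
Qed.

Definition dvdb (d z : Z) : bool := Z.eqb (Z.rem z d) 0.

Lemma dvdb_spec d z : (d <> 0)%Z -> (dvdb d z = true <-> (d | z)%Z).
Proof. intros H. unfold dvdb. rewrite Z.eqb_eq. apply Z.rem_divide; auto. Qed.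

Lemma tuples_in (P : list Z) j t : In t (tuples P j) -> length t = j /\ forall p, In p t -> In p P.
Proof.
  revert t; induction j; intros t Ht; simpl in Ht.
  - destruct Ht as [<-|[]]. simpl; split; auto. intros p [].
  - apply in_flat_map in Ht. destruct Ht as [x [Hx Ht]]. apply in_map_iff in Ht.
    destruct Ht as [t' [<- Ht']]. apply IHj in Ht'. destruct Ht' as [H1 H2].
    simpl; split; [lia|]. intros p [<-|Hp]; auto.
Qed.

Lemma tuples_length (P : list Z) j : length (tuples P j) = (length P ^ j)%nat.
Proof.
  induction j; simpl; auto.
  assert (forall l : list Z, length (flat_map (fun x0 => map (cons x0) (tuples P j)) l) = (length l * length (tuples P j))%nat).
  { induction l; simpl; auto. rewrite length_app, length_map, IHl. lia. }
  rewrite H, IHj. simpl. lia.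
Qed.

Lemma prodZ_pos t : (forall p, In p t -> 1 <= p)%Z -> (1 <= prodZ t)%Z.
Proof.
  induction t; intros H; [simpl; lia|]. change (prodZ (a :: t)) with (a * prodZ t)%Z. assert (1 <= a)%Z by (apply H; left; auto). assert (forall p, In p t -> 1 <= p)%Z by (intros; apply H; right; auto). assert (1 <= prodZ t)%Z by auto. nia.
Qed.

Lemma prodZ_app x y : prodZ (x ++ y) = (prodZ x * prodZ y)%Z.
Proof. induction x; [change (prodZ nil) with 1%Z; simpl app; ring|]. change (prodZ ((a :: x) ++ y)) with (a * prodZ (x ++ y))%Z. rewrite IHx. change (prodZ (a :: x)) with (a * prodZ x)%Z. ring. Qed.

Lemma prodZ_le t B : (forall p, In p t -> 1 <= p <= B)%Z -> (prodZ t <= B ^ Z.of_nat (length t))%Z.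
Proof.
  induction t; intros H; [simpl; lia|]. change (prodZ (a :: t)) with (a * prodZ t)%Z. cbn [length].
  rewrite Nat2Z.inj_succ, Z.pow_succ_r by lia.
  assert (1 <= a <= B)%Z by (apply H; left; auto).
  assert (prodZ t <= B ^ Z.of_nat (length t))%Z by (apply IHt; intros; apply H; right; auto).
  assert (1 <= prodZ t)%Z by (apply prodZ_pos; intros; apply H; right; auto). nia.
Qed.

Section DivCount.
Variable P : list Z.
Hypothesis HP : forall p, In p P -> (2 <= p)%Z.
Variable Zmax : Z.
Variable D : nat.
Hypothesis Hc : forall z, (1 <= z <= Zmax)%Z -> (length (filter (fun p => dvdb p z) P) <= D)%nat.

Lemma divcount j : forall z, (1 <= z <= Zmax)%Z ->
  sumR (map (fun x => indb (dvdb (prodZ x) z)) (tuples P j)) <= INR D ^ j.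
Proof.
  induction j; intros z Hz.
  - simpl. rewrite sumR_cons, sumR_nil. pose proof (indb_le1 (dvdb 1 z)). lra.
  - cbn [tuples]. rewrite sumR_flat_map.
    apply Rle_trans with (sumR (map (fun p => indb (dvdb p z) * INR D ^ j) P)).
    + apply sumR_le. intros p Hp. rewrite sumR_map. cbn [prodZ fold_right].
      assert (Hp2 := HP p Hp).
      destruct (dvdb p z) eqn:E.
      * apply dvdb_spec in E; [|lia]. destruct E as [w Hw].
        assert (Hw1 : (1 <= w <= Zmax)%Z) by nia.
        apply Rle_trans with (sumR (map (fun x => indb (dvdb (prodZ x) w)) (tuples P j))).
        -- apply sumR_le. intros t Ht. fold (prodZ t).
           destruct (tuples_in _ _ _ Ht) as [_ Ht2].
           assert (1 <= prodZ t)%Z by (apply prodZ_pos; intros; specialize (HP p0 (Ht2 p0 H)); lia).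
           destruct (dvdb (p * prodZ t) z) eqn:E2; [|apply indb_nonneg].
           apply dvdb_spec in E2; [|nia]. replace (dvdb (prodZ t) w) with true; [lra|].
           symmetry. apply dvdb_spec; [lia|]. subst z.
           rewrite (Z.mul_comm w p) in E2. apply Z.mul_divide_cancel_l in E2; auto. lia.
        -- simpl indb. rewrite Rmult_1_l. apply IHj; auto.
      * apply Rle_trans with (sumR (map (fun _ : list Z => 0) (tuples P j))).
        -- apply Req_le. apply sumR_ext. intros t Ht. fold (prodZ t).
           destruct (tuples_in _ _ _ Ht) as [_ Ht2].
           assert (1 <= prodZ t)%Z by (apply prodZ_pos; intros; specialize (HP p0 (Ht2 p0 H)); lia).
           destruct (dvdb (p * prodZ t) z) eqn:E2; [|reflexivity].
           apply dvdb_spec in E2; [|nia]. exfalso.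
           assert (dvdb p z = true) by (apply dvdb_spec; [lia|]; apply Z.divide_trans with (p * prodZ t)%Z; auto; exists (prodZ t); ring).
           congruence.
        -- rewrite sumR_const. simpl indb. lra.
    + rewrite (sumR_ext _ (fun p => INR D ^ j * indb (dvdb p z))) by (intros; ring).
      rewrite sumR_scal, sum_indb_length. simpl pow.
      rewrite Rmult_comm. apply Rmult_le_compat_r; [apply pow_le, pos_INR|].
      apply le_INR. apply Hc; auto.
Qed.
End DivCount.

Lemma relp a F : prime a -> (forall p, In p F -> prime p) -> ~ In a F -> rel_prime a (prodZ F).
Proof.
  intros Ha. induction F as [|b F IH]; intros HF Hn.
  - change (prodZ nil) with 1%Z. apply rel_prime_sym, rel_prime_1.
  - change (prodZ (b :: F)) with (b * prodZ F)%Z. apply rel_prime_mult.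
    + apply prime_rel_prime; auto. intro Hd. apply Hn. left.
      symmetry. apply prime_div_prime; auto. apply HF; left; auto.
    + apply IH; [intros; apply HF; right; auto| intro; apply Hn; right; auto].
Qed.

Lemma prod_dvd z F : NoDup F -> (forall p, In p F -> prime p /\ (p | z)%Z) -> (prodZ F | z)%Z.
Proof.
  induction 1 as [|a F Ha HF IH]; intros H.
  - change (prodZ nil) with 1%Z. apply Z.divide_1_l.
  - change (prodZ (a :: F)) with (a * prodZ F)%Z.
    destruct (H a (or_introl eq_refl)) as [Hpa Hda].
    destruct IH as [w Hw]; [intros; apply H; right; auto|].
    assert (rel_prime a (prodZ F)) by (apply relp; auto; intros; apply H; right; auto).
    assert (Hw' : (a | prodZ F * w)%Z) by (rewrite Z.mul_comm, <- Hw; auto).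
    apply Gauss in Hw'; auto. destruct Hw' as [v Hv]. exists v. rewrite Hw, Hv. ring.
Qed.

Lemma prod_lower (N : R) F : 0 <= N / 2 -> (forall p, In p F -> N / 2 <= IZR p) ->
  (N / 2) ^ length F <= IZR (prodZ F).
Proof.
  induction F as [|a F IH]; intros H0 H.
  - simpl. lra.
  - change (prodZ (a :: F)) with (a * prodZ F)%Z. cbn [length pow]. rewrite mult_IZR.
    apply Rmult_le_compat; auto. apply pow_le; auto. apply H; left; auto.
    apply IH; auto. intros; apply H; right; auto.
Qed.

Lemma prime_count (P : list Z) (N : R) (D : nat) z :
  NoDup P -> (forall p, In p P -> prime p /\ N / 2 <= IZR p) ->
  (1 <= z)%Z -> IZR z <= N ^ D -> 2 ^ (D + 1) < N ->
  (length (filter (fun p => dvdb p z) P) <= D)%nat.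
Proof.
  intros HN HP Hz HzN H2.
  set (F := filter (fun p => dvdb p z) P).
  assert (HF : forall p, In p F -> prime p /\ N / 2 <= IZR p /\ (p | z)%Z).
  { intros p Hp. apply filter_In in Hp. destruct Hp as [Hp E]. destruct (HP p Hp) as [Hpr Hle].
    split; auto. split; auto. apply dvdb_spec in E; auto. pose proof (prime_ge_2 p Hpr). lia. }
  assert (Hd : (prodZ F | z)%Z).
  { apply prod_dvd. apply NoDup_filter; auto. intros p Hp; destruct (HF p Hp) as [? [? ?]]; auto. }
  assert (Hpos : (1 <= prodZ F)%Z).
  { apply prodZ_pos. intros p Hp. destruct (HF p Hp) as [Hpr _]. pose proof (prime_ge_2 p Hpr). lia. }
  assert (Hle : (prodZ F <= z)%Z) by (apply Z.divide_pos_le; auto; lia).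
  assert (H2pos : 1 <= 2 ^ (D + 1)) by (apply pow_R1_Rle; lra).
  assert (HN2 : 1 <= N / 2).
  { assert (2 <= 2 ^ (D + 1)). { rewrite Nat.add_1_r. simpl. assert (1 <= 2 ^ D) by (apply pow_R1_Rle; lra). lra. } lra. }
  assert (Hlow : (N / 2) ^ length F <= IZR z).
  { apply Rle_trans with (IZR (prodZ F)). apply prod_lower; [lra|]. intros p Hp; apply HF; auto.
    apply IZR_le; auto. }
  destruct (Nat.le_gt_cases (length F) D) as [|Hgt]; auto. exfalso.
  assert ((N / 2) ^ (D + 1) <= (N / 2) ^ length F) by (apply Rle_pow; [exact HN2| lia]).
  assert (Hk : (N / 2) ^ (D + 1) * 2 ^ (D + 1) = N ^ (D + 1)).
  { rewrite <- Rpow_mult_distr. f_equal. field. }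
  assert (0 < N ^ D) by (apply pow_lt; lra).
  rewrite Nat.add_1_r in Hk, H2. change (N ^ S D) with (N * N ^ D) in Hk.
  assert (N * N ^ D > 2 ^ S D * N ^ D) by (apply Rmult_lt_compat_r; auto).
  assert ((N / 2) ^ S D * 2 ^ S D > N ^ D * 2 ^ S D) by (rewrite (Rmult_comm (N ^ D)); lra).
  assert (0 < 2 ^ S D) by (apply pow_lt; lra).
  assert ((N / 2) ^ S D > N ^ D) by nra.
  rewrite Nat.add_1_r in H. lra.
Qed.

Lemma cong_count (a q c0 : Z) (M : nat) : (1 <= q)%Z -> Z.gcd a q = 1%Z ->
  sumR (map (fun z => indb (Z.eqb (Z.rem (c0 - z * a) q) 0)) (rng M)) <= IZR (Z.of_nat M) / IZR q + 1.
Proof.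
  intros Hq Hg. rewrite sum_indb_length.
  set (F := filter (fun z => Z.eqb (Z.rem (c0 - z * a) q) 0) (rng M)).
  assert (Hrel : rel_prime q a) by (apply rel_prime_sym, Zgcd_1_rel_prime; auto).
  assert (HF : forall z, In z F -> (1 <= z <= Z.of_nat M)%Z /\ (q | c0 - z * a)%Z).
  { intros z Hz. apply filter_In in Hz. destruct Hz as [Hz E]. apply in_rng in Hz. split; auto.
    apply Z.eqb_eq in E. apply Z.rem_divide; auto. lia. }
  assert (Hnd : NoDup (map (fun z => z / q)%Z F)).
  { apply NoDup_map_NoDup_ForallPairs; [|apply NoDup_filter, rng_NoDup].
    intros z1 z2 H1 H2 E. destruct (HF z1 H1) as [_ D1]. destruct (HF z2 H2) as [_ D2].
    assert (Hd : (q | a * (z2 - z1))%Z).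
    { replace (a * (z2 - z1))%Z with ((c0 - z1 * a) - (c0 - z2 * a))%Z by ring. apply Z.divide_sub_r; auto. }
    apply Gauss in Hd; auto. destruct Hd as [k Hk].
    pose proof (Z.div_mod z1 q ltac:(lia)). pose proof (Z.div_mod z2 q ltac:(lia)).
    pose proof (Z.mod_pos_bound z1 q ltac:(lia)). pose proof (Z.mod_pos_bound z2 q ltac:(lia)).
    rewrite E in *. assert (k = 0)%Z by nia. subst k. lia. }
  assert (Hincl : incl (map (fun z => z / q)%Z F) (map Z.of_nat (seq 0 (S (Z.to_nat (Z.of_nat M / q)))))).
  { intros y Hy. apply in_map_iff in Hy. destruct Hy as [z [<- Hz]]. destruct (HF z Hz) as [Hr _].
    apply in_map_iff. exists (Z.to_nat (z / q)). split.
    - apply Z2Nat.id. apply Z.div_pos; lia.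
    - apply in_seq. assert (0 <= z / q <= Z.of_nat M / q)%Z by (split; [apply Z.div_pos; lia| apply Z.div_le_mono; lia]). lia. }
  pose proof (NoDup_incl_length Hnd Hincl) as Hl. rewrite !length_map, length_seq in Hl.
  apply le_INR in Hl. rewrite S_INR, (INR_IZR_INZ (Z.to_nat _)), Z2Nat.id in Hl by (apply Z.div_pos; lia).
  assert (IZR (Z.of_nat M / q) <= IZR (Z.of_nat M) / IZR q).
  { assert (q * (Z.of_nat M / q) <= Z.of_nat M)%Z by (apply Z.mul_div_le; lia).
    apply IZR_le in H. rewrite mult_IZR in H. assert (0 < IZR q) by (apply IZR_lt; lia).
    apply Rmult_le_reg_l with (IZR q); auto. field_simplify; lra. }
  lra.
Qed.

Definition reS (xs : list R) := fold_right Rplus 0 (map e_re xs).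
Definition imS (xs : list R) := fold_right Rplus 0 (map e_im xs).
Definition du (xs : list R) := if Rlt_dec 0 (abs_sum_e xs) then reS xs / abs_sum_e xs else 0.
Definition dv (xs : list R) := if Rlt_dec 0 (abs_sum_e xs) then imS xs / abs_sum_e xs else 0.

Lemma dual xs : abs_sum_e xs = sumR (map (fun x => du xs * e_re x + dv xs * e_im x) xs) /\
                du xs ^ 2 + dv xs ^ 2 <= 1.
Proof.
  rewrite sumR_plus, !sumR_scal.
  change (sumR (map e_re xs)) with (reS xs). change (sumR (map e_im xs)) with (imS xs).
  assert (Hr : abs_sum_e xs = sqrt (reS xs * reS xs + imS xs * imS xs)) by reflexivity.
  assert (H0 : 0 <= reS xs * reS xs + imS xs * imS xs) by nra.
  unfold du, dv. destruct (Rlt_dec 0 (abs_sum_e xs)) as [Hp|Hp].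
  - pose proof (sqrt_sqrt _ H0) as Hs. rewrite <- Hr in Hs. split.
    + replace (reS xs / abs_sum_e xs * reS xs + imS xs / abs_sum_e xs * imS xs)
        with ((reS xs * reS xs + imS xs * imS xs) / abs_sum_e xs) by (field; lra).
      rewrite <- Hs. field. lra.
    + apply Req_le.
      replace ((reS xs / abs_sum_e xs) ^ 2 + (imS xs / abs_sum_e xs) ^ 2)
        with ((reS xs * reS xs + imS xs * imS xs) / (abs_sum_e xs * abs_sum_e xs)) by (field; lra).
      rewrite <- Hs. field. lra.
  - assert (abs_sum_e xs = 0) by (pose proof (sqrt_pos (reS xs * reS xs + imS xs * imS xs)); rewrite Hr; lra).
    split; [rewrite H; ring| lra].
Qed.

Lemma unit_bound u v x : u ^ 2 + v ^ 2 <= 1 -> u * cos x + v * sin x <= 1.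
Proof.
  intros H. pose proof (sin2_cos2 x). unfold Rsqr in H0.
  assert (E : (u * cos x + v * sin x) ^ 2 + (u * sin x - v * cos x) ^ 2 = (u ^ 2 + v ^ 2) * (sin x * sin x + cos x * cos x)) by ring.
  assert (0 <= (u * sin x - v * cos x) ^ 2) by apply pow2_ge_0.
  assert ((u * cos x + v * sin x) ^ 2 <= 1) by nra.
  destruct (Rle_dec (u * cos x + v * sin x) 1); auto. nra.
Qed.

Lemma tuples_split (P : list Z) (F : list Z -> R) j s :
  sumR (map F (tuples P (j + s))) =
  sumR (map (fun x => sumR (map (fun y => F (x ++ y)) (tuples P s))) (tuples P j)).
Proof.
  revert F. induction j; intros F.
  - simpl. rewrite sumR_cons, sumR_nil, Rplus_0_r. reflexivity.
  - cbn [Nat.add tuples]. rewrite !sumR_flat_map. apply sumR_ext. intros p _.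
    rewrite !sumR_map. rewrite (IHj (fun t => F (p :: t))). reflexivity.
Qed.

Lemma primesP_facts N q : 1 <= N ->
  NoDup (primesP N q) /\
  (forall p, In p (primesP N q) -> prime p /\ N / 2 <= IZR p /\ IZR p <= N /\ Z.rem q p <> 0%Z).
Proof.
  intros HN. unfold primesP. split.
  - apply NoDup_filter. apply Injective_map_NoDup; [intros x y; lia|apply seq_NoDup].
  - intros p Hp. apply filter_In in Hp. destruct Hp as [_ E].
    apply andb_prop in E. destruct E as [E E4]. apply andb_prop in E. destruct E as [E E3].
    apply andb_prop in E. destruct E as [E1 E2].
    destruct (prime_dec p); [|discriminate]. destruct (Rle_dec (N / 2) (IZR p)); [|discriminate].
    destruct (Rle_dec (IZR p) N); [|discriminate].
    apply Bool.negb_true_iff in E4. apply Z.eqb_neq in E4. auto.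
Qed.

Lemma final_alg (X Ly Dr Mq LAs Zn q L N : R) (n k s : nat) :
  0 <= X -> X ^ 2 <= Ly * (Dr ^ s * (Mq * (LAs * (Dr ^ k * (Zn / q + 1))))) ->
  0 <= Ly <= N ^ s -> 0 <= Mq <= N ^ s + q -> 0 <= LAs <= L * N ^ k ->
  0 <= Zn <= L * N ^ k -> 1 <= q <= L * N ^ k -> 1 <= N -> 1 <= Dr <= 2 * INR n ->
  n = (k + s)%nat -> 0 <= L ->
  X <= 2 * 2 ^ (n + k) * INR n ^ n *
       Rmax (L * Rpower N (INR n / 2 + INR k / 2)) (L * N ^ n / sqrt q).
Proof.
  intros HX HX2 HLy HMq HLAs HZn Hq HN HDr Hns HL.
  assert (HNp : forall j, 0 < N ^ j) by (intro; apply pow_lt; lra).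
  assert (HDp : forall j, 0 < Dr ^ j) by (intro; apply pow_lt; lra).
  set (A := L * Rpower N (INR n / 2 + INR k / 2)).
  set (Bq := L * N ^ n / sqrt q).
  assert (Hsq : sqrt q * sqrt q = q) by (apply sqrt_sqrt; lra).
  assert (Hsqp : 0 < sqrt q) by (apply sqrt_lt_R0; lra).
  assert (HA2 : A * A = L * L * N ^ (n + k)).
  { unfold A. replace (L * Rpower N (INR n / 2 + INR k / 2) * (L * Rpower N (INR n / 2 + INR k / 2)))
      with (L * L * (Rpower N (INR n / 2 + INR k / 2) * Rpower N (INR n / 2 + INR k / 2))) by ring.
    rewrite <- Rpower_plus. rewrite <- Rpower_pow by lra. rewrite plus_INR. f_equal. f_equal. field. }
  assert (HB2 : Bq * Bq = L * L * N ^ (2 * n) / q).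
  { unfold Bq. replace (2 * n)%nat with (n + n)%nat by lia. rewrite pow_add.
    transitivity (L * L * (N ^ n * N ^ n) / (sqrt q * sqrt q)); [field; lra|]. rewrite Hsq. reflexivity. }
  assert (HA0 : 0 <= A) by (unfold A; apply Rmult_le_pos; auto; unfold Rpower; left; apply exp_pos).
  assert (HB0 : 0 <= Bq) by (unfold Bq; apply Rmult_le_pos; [apply Rmult_le_pos; auto; left; auto| left; apply Rinv_0_lt_compat; auto]).
  set (M := Rmax A Bq).
  assert (HAM : A <= M) by apply Rmax_l. assert (HBM : Bq <= M) by apply Rmax_r.
  assert (T1 : Zn / q + 1 <= 2 * (L * N ^ k) / q).
  { apply Rmult_le_reg_r with q; [lra|]. field_simplify; lra. }
  assert (Hprod : Ly * (Dr ^ s * (Mq * (LAs * (Dr ^ k * (Zn / q + 1))))) <=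
                  N ^ s * (Dr ^ s * ((N ^ s + q) * (L * N ^ k * (Dr ^ k * (2 * (L * N ^ k) / q)))))).
  { assert (0 <= Zn / q + 1) by (assert (0 <= Zn / q) by (apply Rmult_le_pos; [lra| left; apply Rinv_0_lt_compat; lra]); lra).
    apply Rmult_le_compat; try lra.
    - repeat apply Rmult_le_pos; try lra; left; auto.
    - apply Rmult_le_compat_l; [left; auto|].
      apply Rmult_le_compat; try lra.
      + repeat apply Rmult_le_pos; try lra; left; auto.
      + apply Rmult_le_compat; try lra.
        * apply Rmult_le_pos; [left; auto| lra].
        * apply Rmult_le_compat_l; [left; auto| lra]. }
  assert (Heq : N ^ s * (Dr ^ s * ((N ^ s + q) * (L * N ^ k * (Dr ^ k * (2 * (L * N ^ k) / q))))) =
                2 * Dr ^ n * (Bq * Bq + A * A)).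
  { rewrite HA2, HB2, Hns. rewrite !pow_add.
    replace (2 * (k + s))%nat with (k + s + (k + s))%nat by lia. rewrite !pow_add. field. lra. }
  assert (HX2' : X ^ 2 <= 4 * Dr ^ n * (M * M)).
  { assert (Bq * Bq <= M * M) by (apply Rmult_le_compat; lra).
    assert (A * A <= M * M) by (apply Rmult_le_compat; lra).
    assert (2 * Dr ^ n * (Bq * Bq + A * A) <= 2 * Dr ^ n * (M * M + M * M)).
    { apply Rmult_le_compat_l; [specialize (HDp n); lra| lra]. }
    lra. }
  assert (HDn1 : 1 <= Dr ^ n) by (apply pow_R1_Rle; lra).
  assert (HM0 : 0 <= M) by lra.
  assert (HX3 : X <= 2 * Dr ^ n * M).
  { apply Rsqr_incr_0_var; [|apply Rmult_le_pos; lra]. unfold Rsqr.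
    assert (4 * Dr ^ n * (M * M) <= 4 * (Dr ^ n * Dr ^ n) * (M * M)).
    { apply Rmult_le_compat_r; [apply Rmult_le_pos; lra|]. nra. }
    replace (X * X) with (X ^ 2) by ring. nra. }
  assert (HDn : Dr ^ n <= 2 ^ (n + k) * INR n ^ n).
  { apply Rle_trans with ((2 * INR n) ^ n). apply pow_incr; lra.
    rewrite Rpow_mult_distr. apply Rmult_le_compat_r; [apply pow_le, pos_INR|].
    apply Rle_pow; [lra| lia]. }
  apply Rle_trans with (2 * Dr ^ n * M); auto.
  replace (2 * 2 ^ (n + k) * INR n ^ n * M) with (2 * (2 ^ (n + k) * INR n ^ n) * M) by ring.
  apply Rmult_le_compat_r; auto. lra.
Qed.



Lemma const_ge1 n k : (1 <= n)%nat -> 1 <= 2 * 2 ^ (n + k) * INR n ^ n.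
Proof.
  intros. assert (1 <= 2 ^ (n + k)) by (apply pow_R1_Rle; lra).
  assert (1 <= INR n ^ n) by (apply pow_R1_Rle; apply (le_INR 1); auto).
  assert (1 <= 2 ^ (n + k) * INR n ^ n) by (rewrite <- (Rmult_1_l 1); apply Rmult_le_compat; lra). lra.
Qed.

Lemma final_trivial X A B' n k : (1 <= n)%nat -> X <= A -> 0 <= A ->
  X <= 2 * 2 ^ (n + k) * INR n ^ n * Rmax A B'.
Proof.
  intros Hn HX HA. pose proof (const_ge1 n k Hn). pose proof (Rmax_l A B').
  apply Rle_trans with (1 * Rmax A B'); [lra|]. apply Rmult_le_compat_r; lra.
Qed.

Lemma length_LX {A B} (ls : list A) (X : list B) :
  length (flat_map (fun l => map (pair l) X) ls) = (length ls * length X)%nat.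
Proof. induction ls; simpl; auto. rewrite length_app, length_map, IHls. lia. Qed.

Theorem lemma1 :
  exists C : R, 0 < C /\
  forall (a q : Z) (n k L : nat) (N : R),
    (1 <= q)%Z -> Z.gcd a q = 1%Z ->
    (1 <= n)%nat -> (1 <= k)%nat -> (1 <= L)%nat -> 1 <= N ->
    INR L <= N ^ n ->
    IZR q <= INR L * N ^ k ->
    2 ^ (n + k + 1) < N ->
    sumR (map (fun l : nat =>
              abs_sum_e (map (fun t : list Z =>
                                IZR (Z.of_nat l * prodZ t * a) / IZR q)
                             (tuples (primesP N q) n)))
           (seq 1 L))
    <= C * 2 ^ (n + k) * INR n ^ n *
       Rmax (INR L * Rpower N (INR n / 2 + INR k / 2))
            (INR L * N ^ n / sqrt (IZR q)).
Proof.
  exists 2. split; [lra|].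
  intros a q n k L N Hq Hg Hn Hk HL HN HLN HqL H2.
  destruct (primesP_facts N q HN) as [HPnd HPf].
  set (P := primesP N q) in *.
  set (B := (up N - 1)%Z).
  destruct (archimed N) as [Hup1 Hup2].
  assert (HB : IZR B <= N) by (unfold B; rewrite minus_IZR; lra).
  assert (HPB : forall p, In p P -> (2 <= p <= B)%Z).
  { intros p Hp. destruct (HPf p Hp) as [Hpr [_ [Hle _]]]. pose proof (prime_ge_2 p Hpr).
    split; auto. unfold B. assert (IZR p < IZR (up N)) by lra. apply lt_IZR in H0. lia. }
  assert (HB1 : (1 <= B)%Z).
  { unfold B. assert (1 < IZR (up N)) by lra. apply lt_IZR in H. lia. }
  assert (HlenP : INR (length P) <= N).
  { assert (length P <= length (rng (Z.to_nat B)))%nat.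
    { apply NoDup_incl_length; auto. intros p Hp. apply in_rng. specialize (HPB p Hp). lia. }
    rewrite rng_length in H. apply le_INR in H. rewrite (INR_IZR_INZ (Z.to_nat B)), Z2Nat.id in H by lia. lra. }
  set (th := fun (l : nat) (t : list Z) => IZR (Z.of_nat l * prodZ t * a) / IZR q).
  set (u := fun l => du (map (th l) (tuples P n))).
  set (v := fun l => dv (map (th l) (tuples P n))).
  assert (Huv : forall l, u l ^ 2 + v l ^ 2 <= 1) by (intro l; apply dual).
  set (h := fun l t => u l * e_re (th l t) + v l * e_im (th l t)).
  assert (LHS_eq : sumR (map (fun l => abs_sum_e (map (th l) (tuples P n))) (seq 1 L)) =
                   sumR (map (fun l => sumR (map (h l) (tuples P n))) (seq 1 L))).
  { apply sumR_ext. intros l _. rewrite (proj1 (dual _)). rewrite sumR_map. reflexivity. }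
  change (sumR (map (fun l => abs_sum_e (map (th l) (tuples P n))) (seq 1 L)) <=
          2 * 2 ^ (n + k) * INR n ^ n *
          Rmax (INR L * Rpower N (INR n / 2 + INR k / 2)) (INR L * N ^ n / sqrt (IZR q))).
  rewrite LHS_eq.
  assert (HNn : forall j, 0 < N ^ j) by (intro; apply pow_lt; lra).
  assert (HRp : forall x, 0 < Rpower N x) by (intro; unfold Rpower; apply exp_pos).
  destruct (le_lt_dec n k) as [Hnk|Hnk].
  - apply final_trivial; auto.
    2:{ apply Rmult_le_pos; [apply pos_INR| left; apply HRp]. }
    apply Rle_trans with (sumR (map (fun l => sumR (map (fun _ => 1) (tuples P n))) (seq 1 L))).
    { apply sumR_le. intros l _. apply sumR_le. intros t _. unfold h, e_re, e_im. apply unit_bound; auto. }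
    rewrite (sumR_ext _ (fun _ => INR (length P) ^ n)).
    2:{ intros l _. rewrite sumR_const, tuples_length, pow_INR. ring. }
    rewrite sumR_const, length_seq. apply Rmult_le_compat_l; [apply pos_INR|].
    apply Rle_trans with (N ^ n). { apply pow_incr. split; auto; apply pos_INR. }
    rewrite <- Rpower_pow by lra. apply Rle_Rpower; auto.
    assert (INR n <= INR k) by (apply le_INR; auto). lra.
  - set (s := (n - k)%nat). assert (Hns : n = (k + s)%nat) by lia.
    set (D := (n + k)%nat).
    set (X := tuples P k). set (Y := tuples P s).
    set (LX := flat_map (fun l => map (pair l) X) (seq 1 L)).
    set (mk := fun lx : nat * list Z => ((u (fst lx), v (fst lx)), (Z.of_nat (fst lx) * prodZ (snd lx) * a)%Z)).
    set (As := map mk LX).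
    assert (HP2 : forall p, In p P -> (2 <= p)%Z) by (intros p Hp; apply HPB; auto).
    assert (HPc : forall z, (1 <= z)%Z -> IZR z <= N ^ D -> (length (filter (fun p => dvdb p z) P) <= D)%nat).
    { intros z Hz HzN. apply prime_count with N; auto.
      intros p Hp; destruct (HPf p Hp) as [? [? _]]; auto. }
    assert (HpowD : forall j, (j <= D)%nat -> N ^ j <= N ^ D) by (intros; apply Rle_pow; auto).
    assert (E1 : sumR (map (fun l => sumR (map (h l) (tuples P n))) (seq 1 L)) =
                 sumR (map (fun y => Gf q As (prodZ y)) Y)).
    { assert (Hsplit : forall F, sumR (map F (tuples P n)) =
                sumR (map (fun x => sumR (map (fun y => F (x ++ y)) Y)) X)).
      { intro F. unfold X, Y. rewrite Hns at 1. apply tuples_split. }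
      rewrite (sumR_ext _ _ _ (fun l _ => Hsplit (h l))).
      rewrite (sumR_ext _ _ _ (fun l _ => sumR_swap (fun x y => h l (x ++ y)) X Y)).
      rewrite sumR_swap. apply sumR_ext. intros y _.
      unfold Gf, As, LX. rewrite sumR_map, sumR_flat_map. apply sumR_ext. intros l _.
      rewrite sumR_map. apply sumR_ext. intros x _.
      unfold mk, h, th, e_re, e_im, ph. cbn [fst snd]. rewrite prodZ_app.
      replace (Z.of_nat l * (prodZ x * prodZ y) * a)%Z with (Z.of_nat l * prodZ x * a * prodZ y)%Z by ring.
      reflexivity. }
    assert (Hnn : 0 <= sumR (map (fun y => Gf q As (prodZ y)) Y)).
    { rewrite <- E1, <- LHS_eq. apply sumR_nonneg. intros; apply sqrt_pos. }
    rewrite E1.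
    set (Wn := Z.to_nat (B ^ Z.of_nat s)).
    set (mZ := (B ^ Z.of_nat s / q + 1)%Z). set (m := Z.to_nat mZ).
    set (Zn := (L * Z.to_nat (B ^ Z.of_nat k))%nat).
    assert (HBs : (1 <= B ^ Z.of_nat s)%Z) by (pose proof (Z.pow_le_mono_l 1 B (Z.of_nat s)); rewrite Z.pow_1_l in H by lia; lia).
    assert (HBk : (1 <= B ^ Z.of_nat k)%Z) by (pose proof (Z.pow_le_mono_l 1 B (Z.of_nat k)); rewrite Z.pow_1_l in H by lia; lia).
    assert (HIZRpow : forall j, IZR (B ^ Z.of_nat j) <= N ^ j).
    { intro j. rewrite <- pow_IZR. apply pow_incr. split; auto. apply IZR_le; lia. }
    apply final_alg with (Ly := INR (length Y)) (Dr := INR D) (Mq := INR (m * Z.to_nat q))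
      (LAs := INR (length As)) (Zn := IZR (Z.of_nat Zn)) (s := s); auto.
    + assert (E2 := cauchy_schwarz (fun y => Gf q As (prodZ y)) Y).
      assert (E3 : sumR (map (fun y => Gf q As (prodZ y) ^ 2) Y) <=
                   INR D ^ s * sumR (map (fun w => Gf q As w ^ 2) (rng Wn))).
      { apply reindex with (g := fun w => Gf q As w ^ 2).
        - apply rng_NoDup.
        - intros y Hy. apply in_rng. destruct (tuples_in _ _ _ Hy) as [Hl Hin].
          assert (1 <= prodZ y)%Z by (apply prodZ_pos; intros p Hp; specialize (HP2 p (Hin p Hp)); lia).
          assert (prodZ y <= B ^ Z.of_nat (length y))%Z by (apply prodZ_le; intros p Hp; specialize (HPB p (Hin p Hp)); lia).
          rewrite Hl in H0. unfold Wn. lia.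
        - intro; apply pow2_ge_0.
        - intros w Hw. apply in_rng in Hw. unfold Wn in Hw. rewrite Z2Nat.id in Hw by lia.
          apply Rle_trans with (sumR (map (fun y => indb (dvdb (prodZ y) w)) Y)).
          + apply sumR_le. intros y Hy. destruct (Z.eqb_spec (prodZ y) w); [|apply indb_nonneg].
            replace (dvdb (prodZ y) w) with true; [simpl; lra|]. symmetry.
            destruct (tuples_in _ _ _ Hy) as [_ Hin].
            assert (1 <= prodZ y)%Z by (apply prodZ_pos; intros p Hp; specialize (HP2 p (Hin p Hp)); lia).
            apply dvdb_spec; [lia|]. rewrite e. apply Z.divide_refl.
          + apply divcount with (Zmax := (B ^ Z.of_nat s)%Z); auto.
            intros z Hz. apply HPc; [lia|]. apply Rle_trans with (IZR (B ^ Z.of_nat s)); [apply IZR_le; lia|].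
            apply Rle_trans with (N ^ s); auto. apply HpowD. unfold D, s. lia. }
      assert (HmZ : (1 <= mZ)%Z) by (unfold mZ; pose proof (Z.div_pos (B ^ Z.of_nat s) q ltac:(lia) ltac:(lia)); lia).
      assert (E4 : sumR (map (fun w => Gf q As w ^ 2) (rng Wn)) <=
                   sumR (map (fun w => Gf q As w ^ 2) (rng (m * Z.to_nat q)))).
      { assert (HW : (Wn <= m * Z.to_nat q)%nat).
        { unfold Wn, m. rewrite <- Z2Nat.inj_mul by lia. apply Z2Nat.inj_le; try lia.
          unfold mZ. pose proof (Z.div_mod (B ^ Z.of_nat s) q ltac:(lia)).
          pose proof (Z.mod_pos_bound (B ^ Z.of_nat s) q ltac:(lia)). nia. }
        replace (m * Z.to_nat q)%nat with (Wn + (m * Z.to_nat q - Wn))%nat by lia.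
        unfold rng at 2. rewrite seq_app, map_app, map_app, sumR_app.
        assert (0 <= sumR (map (fun w => Gf q As w ^ 2) (map Z.of_nat (seq (1 + Wn) (m * Z.to_nat q - Wn))))).
        { apply sumR_nonneg. intros; apply pow2_ge_0. }
        unfold rng. lra. }
      assert (E5 := parseval q As m Hq).
      specialize (E5 ltac:(intros al Hal; unfold As in Hal; apply in_map_iff in Hal;
                           destruct Hal as [lx [<- _]]; unfold mk; cbn [fst snd]; apply Huv)).
      assert (HXp : forall x, In x X -> (1 <= prodZ x <= B ^ Z.of_nat k)%Z).
      { intros x Hx. destruct (tuples_in _ _ _ Hx) as [Hl Hin].
        assert (1 <= prodZ x)%Z by (apply prodZ_pos; intros p Hp; specialize (HP2 p (Hin p Hp)); lia).
        assert (prodZ x <= B ^ Z.of_nat (length x))%Z by (apply prodZ_le; intros p Hp; specialize (HPB p (Hin p Hp)); lia).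
        rewrite Hl in H0. lia. }
      assert (E6 : sumR (map (fun a1 => sumR (map (fun a2 => indb (Z.rem (snd a1 - snd a2) q =? 0)%Z) As)) As) <=
                   INR (length As) * (INR D ^ k * (IZR (Z.of_nat Zn) / IZR q + 1))).
      { rewrite <- sumR_const. apply sumR_le. intros a1 _.
        unfold As at 1. rewrite sumR_map.
        apply Rle_trans with (INR D ^ k * sumR (map (fun z => indb (Z.rem (snd a1 - z * a) q =? 0)%Z) (rng Zn))).
        2:{ apply Rmult_le_compat_l; [apply pow_le, pos_INR|]. apply cong_count; auto. }
        apply reindex with (g := fun z => indb (Z.rem (snd a1 - z * a) q =? 0)%Z)
                           (phi := fun lx : nat * list Z => (Z.of_nat (fst lx) * prodZ (snd lx))%Z).
        - apply rng_NoDup.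
        - intros lx Hlx. unfold LX in Hlx. apply in_flat_map in Hlx. destruct Hlx as [l [Hl Hlx]].
          apply in_map_iff in Hlx. destruct Hlx as [x [<- Hx]]. cbn [fst snd].
          apply in_seq in Hl. specialize (HXp x Hx). apply in_rng. unfold Zn.
          rewrite Nat2Z.inj_mul, Z2Nat.id by lia. nia.
        - intro; apply indb_nonneg.
        - intros z Hz. apply in_rng in Hz.
          unfold LX. rewrite sumR_flat_map.
          rewrite (sumR_ext _ (fun l => sumR (map (fun x => indb (Z.of_nat l * prodZ x =? z)%Z) X))).
          2:{ intros l _. rewrite sumR_map. reflexivity. }
          rewrite sumR_swap.
          apply Rle_trans with (sumR (map (fun x => indb (dvdb (prodZ x) z)) X)).
          + apply sumR_le. intros x Hx. specialize (HXp x Hx).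
            destruct (dvdb (prodZ x) z) eqn:Ed.
            * apply sum_indb_atmost1; [apply seq_NoDup|]. intros l1 l2 _ _ E1' E2'.
              apply Z.eqb_eq in E1'. apply Z.eqb_eq in E2'. nia.
            * apply Rle_trans with (sumR (map (fun _ : nat => 0) (seq 1 L))).
              -- apply sumR_le. intros l _. destruct (Z.eqb_spec (Z.of_nat l * prodZ x) z); [|simpl; lra].
                 exfalso. assert (dvdb (prodZ x) z = true) by (apply dvdb_spec; [lia|]; exists (Z.of_nat l); lia).
                 congruence.
              -- rewrite sumR_const. simpl. lra.
          + apply divcount with (Zmax := Z.of_nat Zn); auto.
            * intros z' Hz'. apply HPc; [lia|]. apply Rle_trans with (IZR (Z.of_nat Zn)); [apply IZR_le; lia|].
              unfold Zn. rewrite Nat2Z.inj_mul, mult_IZR, Z2Nat.id by lia. rewrite <- INR_IZR_INZ.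
              apply Rle_trans with (N ^ n * N ^ k).
              { apply Rmult_le_compat; auto; [apply pos_INR| apply IZR_le; lia]. }
              rewrite <- pow_add. unfold D. lra. }
      eapply Rle_trans; [exact E2|]. apply Rmult_le_compat_l; [apply pos_INR|].
      eapply Rle_trans; [exact E3|]. apply Rmult_le_compat_l; [apply pow_le, pos_INR|].
      eapply Rle_trans; [exact E4|]. eapply Rle_trans; [exact E5|].
      apply Rmult_le_compat_l; [apply pos_INR|]. exact E6.
    + split; [apply pos_INR|]. unfold Y. rewrite tuples_length, pow_INR. apply pow_incr. split; auto. apply pos_INR.
    + split; [apply pos_INR|].
      assert (HmZ : (1 <= mZ)%Z) by (unfold mZ; pose proof (Z.div_pos (B ^ Z.of_nat s) q ltac:(lia) ltac:(lia)); lia).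
      unfold m. rewrite mult_INR, !INR_IZR_INZ, !Z2Nat.id by lia. rewrite <- mult_IZR.
      assert (mZ * q <= B ^ Z.of_nat s + q)%Z.
      { unfold mZ. pose proof (Z.mul_div_le (B ^ Z.of_nat s) q ltac:(lia)). nia. }
      apply IZR_le in H. rewrite plus_IZR in H. pose proof (HIZRpow s). lra.
    + split; [apply pos_INR|]. unfold As, LX. rewrite length_map, length_LX, length_seq, mult_INR.
      apply Rmult_le_compat_l; [apply pos_INR|]. unfold X. rewrite tuples_length, pow_INR.
      apply pow_incr. split; auto. apply pos_INR.
    + split; [apply IZR_le; lia|]. unfold Zn. rewrite Nat2Z.inj_mul, mult_IZR, Z2Nat.id by lia.
      rewrite <- INR_IZR_INZ. apply Rmult_le_compat_l; [apply pos_INR|]. apply HIZRpow.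
    + split; auto. apply IZR_le; lia.
    + unfold D. rewrite plus_INR. assert (INR k <= INR n) by (apply le_INR; lia).
      assert (1 <= INR n) by (change 1 with (INR 1); apply le_INR; auto). pose proof (pos_INR k). split; lra.
    + apply pos_INR.
Qed.
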